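(* Let $Q$ be a subfield of $\mathbb{R}$, let $R = Q \times Q$ with coordinatewise addition and multiplication $(a,b)\cdot(c,d) = (ac, ad + bc)$, and consider the Frobenius template $(A(Q), C(Q), U(Q))$ in $R$, where $A(Q) = (Q \cap (0,\infty)) \times (Q \cap [0,\infty))$ and $C(Q) = U(Q) = (Q \cap [0,\infty))^2$. Let $n$ be a positive integer and let $(\alpha_1, \dots, \alpha_n)$ be a list of elements $\alpha_i = (a_i, b_i) \in A(Q)$ with $b_1 = 0$. Then $\mathrm{Frob}(\alpha_1, \dots, \alpha_n) = MN(\alpha_1, \dots, \alpha_n) = U(Q)$.
   Context: For a list $(\alpha_1,\dots,\alpha_n)$ in $A(Q)$, $MN(\alpha_1, \dots, \alpha_n) = \{\sum_{i=1}^n \alpha_i \lambda_i : \lambda_1, \dots, \lambda_n \in C(Q)\}$ (product in $R$), and $\mathrm{Frob}(\alpha_1, \dots, \alpha_n) = \{w \in R : w + U(Q) \subseteq MN(\alpha_1, \dots, \alpha_n)\}$, where $w + U(Q) = \{w + u : u \in U(Q)\}$. *)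

(* Defs.v *)
From HB Require Import structures.
From mathcomp Require Import all_boot all_order all_algebra.
From mathcomp Require Import reals.
Set Implicit Arguments. Unset Strict Implicit. Unset Printing Implicit Defensive.
Import Order.TTheory GRing.Theory Num.Theory.
Local Open Scope ring_scope.

Section Template.
Variables (R : realType) (Q : {pred R}).

Definition inRQ (x : R * R) : Prop := x.1 \in Q /\ x.2 \in Q.

Definition rqmul (x y : R * R) : R * R := (x.1 * y.1, x.1 * y.2 + x.2 * y.1).
Definition rqadd (x y : R * R) : R * R := (x.1 + y.1, x.2 + y.2).
Definition rqsum (n : nat) (f : 'I_n -> R * R) : R * R :=
  (\sum_(i < n) (f i).1, \sum_(i < n) (f i).2).

Definition AQ (x : R * R) : Prop := [/\ x.1 \in Q, 0 < x.1, x.2 \in Q & 0 <= x.2].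
Definition CQ (x : R * R) : Prop := [/\ x.1 \in Q, 0 <= x.1, x.2 \in Q & 0 <= x.2].
Definition UQ (x : R * R) : Prop := [/\ x.1 \in Q, 0 <= x.1, x.2 \in Q & 0 <= x.2].

Definition MN (n : nat) (alpha : 'I_n -> R * R) (w : R * R) : Prop :=
  exists lambda : 'I_n -> R * R,
    (forall i, CQ (lambda i)) /\ w = rqsum (fun i => rqmul (alpha i) (lambda i)).

Definition Frob (n : nat) (alpha : 'I_n -> R * R) (w : R * R) : Prop :=
  inRQ w /\ forall u, UQ u -> MN alpha (rqadd w u).

End Template.

(* Main.v *)
Require Import Defs.
From HB Require Import structures.
From mathcomp Require Import all_boot all_order all_algebra.
From mathcomp Require Import reals.
Import Order.TTheory GRing.Theory Num.Theory.
Local Open Scope ring_scope.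

Section H.
Variables (R : realType) (Q : {pred R}) (hQ : GRing.divring_closed Q).

Lemma Q1 : 1 \in Q. Proof. by case: hQ. Qed.
Lemma QB u v : u \in Q -> v \in Q -> u - v \in Q. Proof. by case: hQ => _ h _; apply: h. Qed.
Lemma QD' u v : u \in Q -> v \in Q -> u / v \in Q. Proof. by case: hQ => _ _ h; apply: h. Qed.
Lemma Q0 : 0 \in Q. Proof. by rewrite -(subrr 1); apply: QB; apply: Q1. Qed.
Lemma QN v : v \in Q -> - v \in Q. Proof. by move=> h; rewrite -sub0r; apply: QB => //; apply: Q0. Qed.
Lemma QD u v : u \in Q -> v \in Q -> u + v \in Q.
Proof. by move=> hu hv; rewrite -(opprK v); apply: QB => //; apply: QN. Qed.
Lemma QV v : v \in Q -> v^-1 \in Q.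
Proof. by move=> hv; rewrite -(mul1r v^-1); apply: QD' => //; apply: Q1. Qed.
Lemma QM u v : u \in Q -> v \in Q -> u * v \in Q.
Proof. by move=> hu hv; rewrite -(invrK v); apply: QD' => //; apply: QV. Qed.
Lemma Qsum n (F : 'I_n -> R) : (forall i, F i \in Q) -> \sum_(i < n) F i \in Q.
Proof.
move=> h; apply: (big_ind (fun x => x \in Q)) => //; first exact: Q0.
by move=> x y; apply: QD.
Qed.
End H.

Theorem proposition4p2 (R : realType) (Q : {pred R})
  (hQ : GRing.divring_closed Q)
  (n : nat) (hn : (0 < n)%N) (alpha : 'I_n -> R * R)
  (hA : forall i, AQ Q (alpha i))
  (hb1 : forall i : 'I_n, nat_of_ord i = 0%N -> (alpha i).2 = 0) :
  (forall w, Frob Q alpha w <-> MN Q alpha w) /\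
  (forall w, MN Q alpha w <-> UQ Q w).
Proof.
have MU : forall w, MN Q alpha w -> UQ Q w.
  move=> w [lam [hl ->]]; rewrite /UQ /rqsum /rqmul /=.
  split.
  - apply: Qsum => // i; have [? ? ? ?] := hA i; have [? ? ? ?] := hl i.
    exact: QM.
  - apply: sumr_ge0 => i _; have [? ? ? ?] := hA i; have [? ? ? ?] := hl i.
    by apply: mulr_ge0 => //; apply: ltW.
  - apply: Qsum => // i; have [? ? ? ?] := hA i; have [? ? ? ?] := hl i.
    by apply: QD => //; apply: QM.
  - apply: sumr_ge0 => i _; have [? ? ? ?] := hA i; have [? ? ? ?] := hl i.
    by apply: addr_ge0; apply: mulr_ge0 => //; apply: ltW.
have UM : forall w, UQ Q w -> MN Q alpha w.
  move=> [x y] [/= hx x0 hy y0].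
  pose i0 : 'I_n := Ordinal hn.
  have [ha a0 hb b0] := hA i0.
  have b00 : (alpha i0).2 = 0 by apply: hb1.
  set a := (alpha i0).1 in ha a0 hb b0 *.
  exists (fun i => if i == i0 then (x / a, y / a) else (0, 0)); split.
    move=> i; case: ifP => _; split => //=; try exact: Q0.
    - by apply: QD'.
    - by apply: divr_ge0 => //; apply: ltW.
    - by apply: QD'.
    - by apply: divr_ge0 => //; apply: ltW.
  rewrite /rqsum /rqmul /= (bigD1 i0) //= big1 => [|j hj]; last first.
    by rewrite (negbTE hj) /= mulr0.
  rewrite (bigD1 i0) //= big1 => [|j hj]; last first.
    by rewrite (negbTE hj) /= !mulr0 addr0.
  rewrite /= b00 mul0r !addr0 -/a.
  have an : a != 0 by rewrite gt_eqF.
  by rewrite !(mulrC a) !mulfVK.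
split => w; last by split; [apply: MU | apply: UM].
split.
  move=> [_ h]; have := h (0, 0).
  rewrite /rqadd /= !addr0 -surjective_pairing; apply.
  by split => //; apply: Q0.
move=> hw; have [h1 h2 h3 h4] := MU w hw; split; first by split.
move=> [u1 u2] [/= ? ? ? ?]; apply: UM; split => /=.
- exact: QD.
- exact: addr_ge0.
- exact: QD.
- exact: addr_ge0.
Qed.
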